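(* Let $X$ be an FK-space containing $\phi$, and let $\overline{\phi}$ denote the closure of $\phi$ in $X$. If $Y$ is an FK-space with $\overline{\phi}\subseteq Y\subseteq X$, then $D_p^qB^+(Y)=D_p^qB^+(X)$.
   Context: An FK-space is a vector subspace of the space $w$ of all complex sequences with a complete metrizable locally convex topology in which coordinate functionals are continuous; $X'$ is its continuous dual. $\delta^j$ has $1$ in position $j$, $0$ elsewhere; $\phi=\operatorname{span}\{\delta^j\}$. $p(n)<q(n)$ are nonnegative integer sequences with $q(n)\to\infty$. For an FK-space $X\supseteq\phi$, $D_p^qB^+(X)=\{x\in w:\sup_n|\frac{1}{q(n)-p(n)}\sum_{k=p(n)+1}^{q(n)}\sum_{j=1}^kx_jf(\delta^j)|<\infty\ \forall f\in X'\}$. *)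

(* Defs.v *)
From HB Require Import structures.
From mathcomp Require Import all_boot all_order all_algebra.
From mathcomp Require Import reals.
From mathcomp Require Import complex.

Set Implicit Arguments.
Unset Strict Implicit.
Unset Printing Implicit Defensive.

Import Order.TTheory GRing.Theory Num.Theory.
Local Open Scope ring_scope.

(* Complex sequences (elements of w), 0-based: the paper's x_j (j >= 1)
   is x (j-1) here. *)
Section FK.
Variable R : realType.
Local Notation C := R[i].

Definition seqC := nat -> C.

Definition cabs (z : C) : R := Num.sqrt (complex.Re z ^+ 2 + complex.Im z ^+ 2).

Definition szero : seqC := fun _ => 0.
Definition sadd (x y : seqC) : seqC := fun j => x j + y j.
Definition ssub (x y : seqC) : seqC := fun j => x j - y j.
Definition sscale (a : C) (x : seqC) : seqC := fun j => a * x j.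

Definition delta (j : nat) : seqC := fun i => if i == j then 1 else 0.

(* membership in phi = span of the delta's = finitely supported sequences *)
Definition in_phi (x : seqC) : Prop := exists N, forall j, (N <= j)%N -> x j = 0.

(* (X, sn) is an FK-space: X is a linear subspace of w carrying the
   complete metrizable locally convex topology generated by the increasing
   countable family of seminorms sn (a Frechet space), Hausdorff, with
   continuous coordinate functionals. *)
Definition is_FK (X : seqC -> Prop) (sn : nat -> seqC -> R) : Prop :=
  X szero /\
      (forall x y, X x -> X y -> X (sadd x y)) /\
      (forall a x, X x -> X (sscale a x)) /\
      (forall k x, X x -> 0 <= sn k x) /\
      (forall k x y, X x -> X y -> sn k (sadd x y) <= sn k x + sn k y) /\
      (forall k a x, X x -> sn k (sscale a x) = cabs a * sn k x) /\
      (forall k x, X x -> sn k x <= sn k.+1 x) /\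
      (forall x, X x -> (forall k, sn k x = 0) -> x = szero) /\
      (forall u : nat -> seqC, (forall n, X (u n)) ->
         (forall k (e : R), 0 < e -> exists N, forall m n, (N <= m)%N -> (N <= n)%N ->
             sn k (ssub (u m) (u n)) < e) ->
         exists x, X x /\ forall k (e : R), 0 < e -> exists N, forall n, (N <= n)%N ->
             sn k (ssub (u n) x) < e) /\
      (forall j, exists k (c : R), forall x, X x -> cabs (x j) <= c * sn k x).

Definition in_dual (X : seqC -> Prop) (sn : nat -> seqC -> R) (f : seqC -> C) : Prop :=
  [/\ (forall x y, X x -> X y -> f (sadd x y) = f x + f y),
      (forall a x, X x -> f (sscale a x) = a * f x) &
      exists k (c : R), forall x, X x -> cabs (f x) <= c * sn k x].

Definition phi_closure (X : seqC -> Prop) (sn : nat -> seqC -> R) (x : seqC) : Prop :=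
  X x /\ forall k (e : R), 0 < e -> exists y, in_phi y /\ sn k (ssub x y) < e.

Definition DqpBplus (X : seqC -> Prop) (sn : nat -> seqC -> R) (p q : nat -> nat)
    (x : seqC) : Prop :=
  forall f, in_dual X sn f ->
    exists M : R, forall n,
      cabs (((q n - p n)%:R)^-1 *
            \sum_((p n).+1 <= k < (q n).+1) \sum_(0 <= j < k) x j * f (delta j)) <= M.

End FK.

(* Main.v *)
Require Import Defs.
From HB Require Import structures.
From mathcomp Require Import all_boot all_order all_algebra.
From mathcomp Require Import reals.
From mathcomp Require Import complex.
From mathcomp Require Import boolp classical_sets.
From mathcomp Require Import ring lra zify.
Import Order.TTheory GRing.Theory Num.Theory.
Local Open Scope ring_scope.

Section Basics.
Set Implicit Arguments.
Unset Strict Implicit.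
Variable R : realType.
Local Notation C := R[i].
Local Open Scope complex_scope.

Lemma cabsC (z : C) : (cabs z)%:C = `|z|.
Proof. by rewrite normc_def. Qed.

Lemma cabs_ge0 (z : C) : 0 <= cabs z.
Proof. exact: sqrtr_ge0. Qed.

Lemma cabsM (a b : C) : cabs (a * b) = cabs a * cabs b.
Proof. by apply: complexI; rewrite rmorphM /= !cabsC normrM. Qed.

Lemma cabsD (a b : C) : cabs (a + b) <= cabs a + cabs b.
Proof. by rewrite -lecR rmorphD /= !cabsC ler_normD. Qed.

Lemma cabs_eq0 (z : C) : cabs z = 0 -> z = 0.
Proof. by move=> h; apply/eqP; rewrite -normr_eq0 -cabsC h. Qed.

Lemma cabsN (z : C) : cabs (- z) = cabs z.
Proof. by apply: complexI; rewrite !cabsC normrN. Qed.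

Lemma cabsR (r : R) : cabs r%:C = `|r|.
Proof. by rewrite /cabs /= expr0n /= addr0 sqrtr_sqr. Qed.

Lemma Re_le_cabs (z : C) : complex.Re z <= cabs z.
Proof.
rewrite /cabs; apply: le_trans (ler_norm _) _.
rewrite -sqrtr_sqr ler_sqrt ?addr_ge0 ?sqr_ge0 //.
by rewrite lerDl sqr_ge0.
Qed.

Lemma cabs_conj (z : C) : cabs (z^*) = cabs z.
Proof. by case: z => a b; rewrite /cabs /= sqrrN. Qed.

Lemma mul_conj (z : C) : z * z^* = ((cabs z) ^+ 2)%:C.
Proof.
rewrite /cabs sqr_sqrtr ?addr_ge0 ?sqr_ge0 //.
case: z => a b /=; apply/eqP; rewrite eq_complex /=; apply/andP; split; apply/eqP.
  by rewrite mulrN opprK !expr2.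
by rewrite mulrN mulrC addNr.
Qed.


Lemma le_eps (x y : R) : (forall e, 0 < e -> x <= y + e) -> x <= y.
Proof.
move=> h; rewrite leNgt; apply/negP => lt.
have hp : 0 < (x - y) / 2 by rewrite divr_gt0 // subr_gt0.
have := h _ hp; lra.
Qed.

Lemma cabs_le_eps0 (z : C) : (forall e, 0 < e -> cabs z <= e) -> z = 0.
Proof.
move=> h; apply: cabs_eq0; apply/eqP; rewrite eq_le cabs_ge0 andbT.
by apply: le_eps => e /h; rewrite add0r.
Qed.

Lemma archi (e : R) : 0 < e -> exists N : nat, forall n, (N <= n)%N -> 1 / n.+1%:R < e.
Proof.
move=> e0; have := @archi_boundP _ (e^-1); rewrite invr_ge0 ltW //.
move/(_ isT) => h; exists (Num.Def.archi_bound (e^-1)) => n hn.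
rewrite ltr_pdivrMr ?ltr0Sn // -ltr_pdivrMl // mulr1.
apply: (lt_le_trans h); rewrite ler_nat; apply: (leq_trans hn); exact: leqnSn.
Qed.

Implicit Types x y z w : seqC R.

Lemma ssub_addE x y : ssub x y = sadd x (sscale (-1) y).
Proof. by apply: funext => j; rewrite /ssub /sadd /sscale mulN1r. Qed.

Lemma ssub_tri x y z : ssub x z = sadd (ssub x y) (ssub y z).
Proof. by apply: funext => j; rewrite /ssub /sadd; ring. Qed.

Lemma ssub_sym x y : ssub y x = sscale (-1) (ssub x y).
Proof. by apply: funext => j; rewrite /ssub /sscale; ring. Qed.

Lemma ssub_xx x : ssub x x = sscale 0 x.
Proof. by apply: funext => j; rewrite /ssub /sscale subrr mul0r. Qed.

Record FKl (E : seqC R -> Prop) (s : nat -> seqC R -> R) : Prop := FKL {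
  fk0 : E (szero R);
  fkD : forall x y, E x -> E y -> E (sadd x y);
  fkZ : forall a x, E x -> E (sscale a x);
  fk_ge0 : forall k x, E x -> 0 <= s k x;
  fk_tri : forall k x y, E x -> E y -> s k (sadd x y) <= s k x + s k y;
  fk_hom : forall k a x, E x -> s k (sscale a x) = cabs a * s k x;
  fk_mono : forall k x, E x -> s k x <= s k.+1 x;
  fk_cpl : forall u : nat -> seqC R, (forall n, E (u n)) ->
         (forall k (e : R), 0 < e -> exists N, forall m n, (N <= m)%N -> (N <= n)%N ->
             s k (ssub (u m) (u n)) < e) ->
         exists x, E x /\ forall k (e : R), 0 < e -> exists N, forall n, (N <= n)%N ->
             s k (ssub (u n) x) < e;
  fk_coord : forall j, exists k (c : R), 0 < c /\ forall x, E x -> cabs (x j) <= c * s k x }.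

Section FKlTheory.
Variables (E : seqC R -> Prop) (s : nat -> seqC R -> R) (hE : FKl E s).


Lemma fkB x y : E x -> E y -> E (ssub x y).
Proof. by move=> ? ?; rewrite ssub_addE; apply: (fkD hE) => //; apply: (fkZ hE). Qed.

Lemma fk_s0 k x : E x -> s k (ssub x x) = 0.
Proof. by move=> ?; rewrite ssub_xx (fk_hom hE) // /cabs /= expr0n /= addr0 sqrtr0 mul0r. Qed.

Lemma fk_sym k x y : E x -> E y -> s k (ssub y x) = s k (ssub x y).
Proof.
move=> ? ?; rewrite ssub_sym (fk_hom hE); last exact: fkB.
rewrite cabsN (_ : cabs 1 = 1) ?mul1r //.
by rewrite (_ : 1 = (1:R)%:C) // cabsR normr1.
Qed.

Lemma fk_tri3 k x y z : E x -> E y -> E z ->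
  s k (ssub x z) <= s k (ssub x y) + s k (ssub y z).
Proof. by by move=> ? ? ?; rewrite (ssub_tri x y z) (fk_tri hE) //; exact: fkB. Qed.

Lemma fk_monoN k k' x : (k <= k')%N -> E x -> s k x <= s k' x.
Proof.
move=> /subnK <- Ex; elim: (k' - k)%N => [|n ih] //.
by apply: le_trans ih _; rewrite addSn; apply: (fk_mono hE).
Qed.

Lemma fk_homR k (r : R) x : E x -> s k (sscale r%:C x) = `|r| * s k x.
Proof. by move=> ?; rewrite (fk_hom hE) // cabsR. Qed.

Lemma fk_subD k x y : E x -> E y -> s k (ssub x y) <= s k x + s k y.
Proof.
move=> ? ?; rewrite ssub_addE; apply: le_trans (fk_tri hE _ _ _) _ => //; first exact: (fkZ hE).
rewrite (fk_hom hE) // cabsN (_ : cabs 1 = 1) ?mul1r //.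
by rewrite (_ : 1 = (1:R)%:C) // cabsR normr1.
Qed.

End FKlTheory.

Definition cl (E : seqC R -> Prop) (s : nat -> seqC R -> R) (A : seqC R -> Prop) y :=
  forall j d, 0 < d -> exists z, E z /\ A z /\ s j (ssub y z) < d.

Lemma baire E s (hE : FKl E s) (A : nat -> seqC R -> Prop) :
  (forall y, E y -> exists m, A m y) ->
  exists m y0 k0 e0, E y0 /\ 0 < e0 /\
    forall y, E y -> s k0 (ssub y y0) < e0 -> cl E s (A m) y.
Proof.
move=> cov; apply: contrapT => Hn.
have step : forall m y0 k0 e0, E y0 -> 0 < e0 -> exists y j d,
    [/\ E y, s k0 (ssub y y0) < e0, 0 < d &
        forall z, E z -> A m z -> d <= s j (ssub y z)].
  move=> m y0 k0 e0 Ey0 e0p; apply: contrapT => Hn2; apply: Hn.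
  exists m, y0, k0, e0; split => //; split => // y Ey hy j d dp; apply: contrapT => Hn3; apply: Hn2.
  exists y, j, d; split => // z Ez Az; rewrite leNgt; apply/negP => lt; apply: Hn3.
  by exists z.
pose P (n : nat) (st st' : seqC R * nat * R) :=
  E st'.1.1 /\ 0 < st'.2 /\ st'.2 <= st.2 / 2 /\ st'.2 <= 1 / n.+1%:R /\
      (st.1.2 < st'.1.2)%N /\ s st.1.2 (ssub st'.1.1 st.1.1) < st.2 / 2 /\
      forall w, E w -> s st'.1.2 (ssub w st'.1.1) <= st'.2 -> ~ cl E s (A n) w.
have stepP : forall n st, exists st', (E st.1.1 /\ 0 < st.2) -> P n st st'.
  move=> n [[y K] e] /=.
  have [[Ey ep]|nh] := pselect (E y /\ 0 < e); last by exists (y, K, e) => /nh.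
  have e2 : 0 < e / 2 by rewrite divr_gt0.
  have [y' [j [d [Ey' hy' dp hav]]]] := step n y K (e/2) Ey e2.
  have d2 : 0 < d / 2 by rewrite divr_gt0.
  have n1 : (0:R) < 1 / n.+1%:R by rewrite div1r invr_gt0 ltr0Sn.
  pose e' := Num.min (d / 2) (Num.min (e / 2) (1 / n.+1%:R)).
  have e'p : 0 < e' by rewrite !lt_min d2 e2 n1.
  have e'1 : e' <= d / 2 by rewrite ge_min lexx.
  have e'2 : e' <= e / 2 by rewrite !ge_min lexx /= orbT.
  have e'3 : e' <= 1 / n.+1%:R by rewrite !ge_min lexx /= !orbT.
  exists (y', maxn j K.+1, e') => _; rewrite /P /=; do !split => //.
  - by rewrite leq_max ltnSn orbT.
  - move=> w Ew hw hcl.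
    have [z [Ez [Az hz]]] := hcl j (d/2) d2.
    have h1 := hav z Ez Az.
    have h2 := fk_tri3 hE j Ey' Ew Ez.
    have h3 : s j (ssub y' w) <= e'.
      rewrite (fk_sym hE) //; apply: le_trans hw.
      by apply: (fk_monoN hE (leq_maxl _ _)); exact: (fkB hE).
    lra.
pose stf n st := projT1 (cid (stepP n st)).
have stfP n st : E st.1.1 /\ 0 < st.2 -> P n st (stf n st) := projT2 (cid (stepP n st)).
pose st := fix f n := if n is n'.+1 then stf n' (f n') else (szero R, 0%N, 1).
have inv : forall n, E (st n).1.1 /\ 0 < (st n).2.
  elim => [|n [ih1 ih2]]; first by split; [exact: (fk0 hE) | exact: ltr01].
  by have [? [? _]] := stfP n (st n) (conj ih1 ih2).
have hP : forall n, P n (st n) (st n.+1) := fun n => stfP n (st n) (inv n).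
pose u n := (st n).1.1; pose K n := (st n).1.2; pose e n := (st n).2.
have Eu n : E (u n) by case: (inv n).
have hQ : forall n, [/\ e n.+1 <= e n / 2, e n.+1 <= 1 / n.+1%:R, (K n < K n.+1)%N,
    s (K n) (ssub (u n.+1) (u n)) < e n / 2 &
    forall w, E w -> s (K n.+1) (ssub w (u n.+1)) <= e n.+1 -> ~ cl E s (A n) w].
  by move=> n; have [_ [_ [? [? [? [? ?]]]]]] := hP n.
have ep n : 0 < e n by case: (inv n).
have Kmono : forall n m, (K n <= K (n + m))%N.
  move=> n; elim => [|m ih]; first by rewrite addn0.
  by apply: (leq_trans ih); rewrite addnS; case: (hQ (n + m)%N) => _ _ /ltnW h _ _.
have Kge : forall n, (n <= K n)%N.
  elim => // n ih; case: (hQ n) => _ _ h _ _; exact: leq_ltn_trans ih h.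
have claim1 : forall n m, s (K n) (ssub (u (n + m)%N) (u n)) <= e n - e (n + m)%N.
  move=> n; elim => [|m ih]; first by rewrite addn0 (fk_s0 hE) ?subrr.
  have [hlt _ _ hs _] := hQ (n + m)%N.
  have h2 := fk_tri3 hE (K n) (Eu (n + m)%N.+1) (Eu (n + m)%N) (Eu n).
  have h3 : s (K n) (ssub (u (n + m)%N.+1) (u (n + m)%N)) <= s (K (n + m)%N) (ssub (u (n + m)%N.+1) (u (n + m)%N)).
    by apply: (fk_monoN hE); [exact: Kmono | exact: (fkB hE)].
  rewrite addnS; lra.
have [x [Ex hx]] : exists x, E x /\ forall k (e : R), 0 < e -> exists N, forall n, (N <= n)%N ->
             s k (ssub (u n) x) < e.
  apply: (fk_cpl hE) => // k eps epsp.
  have eps2 : 0 < eps / 2 by rewrite divr_gt0.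
  have [N0 hN0] := archi eps2.
  pose N := (maxn N0 k).+1.
  have eN : e N < eps / 2.
    have [_ h _ _ _] := hQ (maxn N0 k).
    by apply: le_lt_trans h _; apply: hN0; rewrite leq_max leqnn.
  have kN : (k <= K N)%N by apply: leq_trans (Kge N); apply: leqW; rewrite leq_max leqnn orbT.
  exists N => m n hm hn.
  have hm' := claim1 N (m - N)%N; rewrite subnKC // in hm'.
  have hn' := claim1 N (n - N)%N; rewrite subnKC // in hn'.
  have h2 := fk_tri3 hE k (Eu m) (Eu N) (Eu n).
  have h3 : s k (ssub (u m) (u N)) <= s (K N) (ssub (u m) (u N)).
    by apply: (fk_monoN hE) => //; exact: (fkB hE).
  have h4 : s k (ssub (u N) (u n)) <= s (K N) (ssub (u n) (u N)).
    by rewrite (fk_sym hE) //; apply: (fk_monoN hE) => //; exact: (fkB hE).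
  have := ep m; have := ep n; lra.
have claim2 : forall n, s (K n) (ssub x (u n)) <= e n.
  move=> n; apply: le_eps => eps epsp.
  have [N hN] := hx (K n) eps epsp.
  pose m := maxn N n.
  have hm := hN m (leq_maxl _ _).
  have h1 := claim1 n (m - n)%N; rewrite subnKC ?leq_maxr // in h1.
  have h2 := fk_tri3 hE (K n) Ex (Eu m) (Eu n).
  rewrite -(fk_sym hE (K n) (Eu m) Ex) in hm.
  have := ep m; lra.
have [m Am] := cov x Ex.
have [_ _ _ _ hav] := hQ m.
apply: (hav x Ex (claim2 m.+1)) => j d dp.
by exists x; split => //; split => //; rewrite (fk_s0 hE).
Qed.


Lemma almost_cont E sE F sF (hE : FKl E sE) (hF : FKl F sF)
  (sub : forall x, E x -> F x) k L :
  exists k0 c, (L <= k0)%N /\ 0 <= c /\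
    forall r y, 0 < r -> E y -> sE k0 y < r -> forall j d, 0 < d ->
      exists z, E z /\ sF k z <= c * r /\ sE j (ssub y z) < d.
Proof.
pose A m := fun y => E y /\ sF k y <= m%:R.
have cov : forall y, E y -> exists m, A m y.
  move=> y Ey; have h0 := fk_ge0 hF k (sub _ Ey).
  by exists (Num.Def.archi_bound (sF k y)); split => //; exact/ltW/archi_boundP.
have [m [y0 [k0 [e0 [Ey0 [e0p hb]]]]]] := baire hE cov.
exists (maxn k0 L), (2 * m%:R / e0); split; first exact: leq_maxr.
split; first by rewrite divr_ge0 ?mulr_ge0 ?ler0n ?ltW.
move=> r y rp Ey hy j d dp.
have hy0 : sE k0 y < r.
  by apply: le_lt_trans hy; apply: (fk_monoN hE (leq_maxl _ _)).
have r0 : r != 0 by rewrite gt_eqF.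
have e00 : e0 != 0 by rewrite gt_eqF.
pose a := (e0 / r)%:C; pose b := (r / e0)%:C.
have ab : b * a = 1.
  rewrite -rmorphM /= (_ : r / e0 * (e0 / r) = 1) //.
  by rewrite mulrA divrK ?unitfE // divff.
have cb : cabs b = r / e0 by rewrite cabsR ger0_norm // divr_ge0 ?ltW.
have ca : cabs a = e0 / r by rewrite cabsR ger0_norm // divr_ge0 ?ltW.
pose y' := sscale a y.
have Ey' : E y' by exact: (fkZ hE).
have hy' : sE k0 y' < e0.
  rewrite /y' (fk_hom hE) // ca.
  have : e0 / r * sE k0 y < e0 / r * r by rewrite ltr_pM2l // divr_gt0.
  by rewrite divrK ?unitfE.
pose d' := d * e0 / r / 2.
have d'p : 0 < d' by rewrite /d' !divr_gt0 // mulr_gt0.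
have in1 : sE k0 (ssub (sadd y0 y') y0) < e0.
  suff -> : ssub (sadd y0 y') y0 = y' by [].
  by apply: funext => i; rewrite /ssub /sadd; ring.
have in2 : sE k0 (ssub y0 y0) < e0 by rewrite (fk_s0 hE).
have [z1 [Ez1 [[_ Az1] h1]]] := hb _ (fkD hE Ey0 Ey') in1 j d' d'p.
have [z2 [Ez2 [[_ Az2] h2]]] := hb _ Ey0 in2 j d' d'p.
have Ez12 : E (ssub z1 z2) by exact: (fkB hE).
exists (sscale b (ssub z1 z2)); split; first exact: (fkZ hE).
split.
  rewrite (fk_hom hF); last exact: sub.
  rewrite cb.
  have := fk_subD hF k (sub _ Ez1) (sub _ Ez2).
  move=> hs; apply: (le_trans (ler_wpM2l _ hs)); first by rewrite divr_ge0 ?ltW.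
  have -> : 2 * m%:R / e0 * r = r / e0 * (2 * m%:R) by ring.
  by apply: ler_wpM2l; [rewrite divr_ge0 ?ltW | lra].
have -> : ssub y (sscale b (ssub z1 z2)) =
    sscale b (ssub (ssub (sadd y0 y') z1) (ssub y0 z2)).
  apply: funext => i; rewrite /ssub /sadd /sscale /y' /sscale.
  transitivity (b * a * y i - b * (z1 i - z2 i)); first by rewrite ab mul1r.
  ring.
rewrite (fk_hom hE); last by apply: (fkB hE); apply: (fkB hE) => //; exact: (fkD hE).
rewrite cb.
have := fk_subD hE j (fkB hE (fkD hE Ey0 Ey') Ez1) (fkB hE Ey0 Ez2) => hs.
have rep : 0 < r / e0 by rewrite divr_gt0.
apply: (le_lt_trans (ler_wpM2l (ltW rep) hs)).
have -> : d = r / e0 * (2 * d') by rewrite /d'; field; rewrite r0 e00.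
by rewrite ltr_pM2l //; lra.
Qed.


Lemma pow2_ge (n : nat) : n.+1%:R <= (2 : R) ^+ n.
Proof.
by rewrite -natrX ler_nat; apply: ltn_expl.
Qed.

Lemma incl_cont E sE F sF (hE : FKl E sE) (hF : FKl F sF)
  (sub : forall x, E x -> F x) k :
  exists k' c, 0 <= c /\ forall y, E y -> sF k y <= c * sE k' y.
Proof.
have AC : forall l, exists p : nat * R, (l <= p.1)%N /\ 0 <= p.2 /\
    forall r y, 0 < r -> E y -> sE p.1 y < r -> forall j d, 0 < d ->
      exists z, E z /\ sF l z <= p.2 * r /\ sE j (ssub y z) < d.
  move=> l; have [k0 [c [h1 [h2 h3]]]] := almost_cont hE hF sub l l.
  by exists (k0, c).
pose K0 l := (projT1 (cid (AC l))).1.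
pose Cf l := (projT1 (cid (AC l))).2.
have ACP : forall l, (l <= K0 l)%N /\ 0 <= Cf l /\
    forall r y, 0 < r -> E y -> sE (K0 l) y < r -> forall j d, 0 < d ->
      exists z, E z /\ sF l z <= Cf l * r /\ sE j (ssub y z) < d.
  by move=> l; exact: (projT2 (cid (AC l))).
have main : forall y r, E y -> 0 < r -> sE (K0 k) y < r / (1 + Cf k) -> sF k y <= 2 * r.
  move=> y r Ey rp hy.
  pose b (i : nat) := r / (2 : R) ^+ i.
  have bp i : 0 < b i by rewrite /b divr_gt0 // exprn_gt0.
  have bS i : b i.+1 = b i / 2 by rewrite /b exprSr invfM mulrA.
  have b0 : b 0%N = r by rewrite /b expr0 divr1.
  have bsmall : forall eps, 0 < eps -> exists N, forall n, (N <= n)%N -> b n < eps.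
    move=> eps epsp; have [N hN] := archi (divr_gt0 epsp rp).
    exists N => n hn; have := hN n hn.
    rewrite /b ltr_pdivrMr ?ltr0Sn // => h1.
    rewrite ltr_pdivrMr ?exprn_gt0 //.
    have h2 := pow2_ge n.
    have : 1 < eps / r * n.+1%:R by [].
    rewrite mulrAC ltr_pdivlMr // mul1r => h3.
    apply: lt_le_trans h3 _; apply: ler_wpM2l; [exact: ltW | exact: h2].
  have C1 l : 1 <= 1 + Cf l by rewrite lerDl; case: (ACP l) => _ [].
  have C1p l : 0 < 1 + Cf l by apply: lt_le_trans (C1 l); exact: ltr01.
  pose rr (i : nat) := b i / (1 + Cf (k + i)%N).
  have rrp i : 0 < rr i by rewrite /rr divr_gt0.
  have rrb i : rr i <= b i.
    by rewrite /rr ler_pdivrMr // ler_peMr // ltW.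
  have Crr i : Cf (k + i)%N * rr i <= b i.
    rewrite /rr mulrA ler_pdivrMr // mulrC ler_wpM2l ?ltW //.
    lra.
  have step : forall i w, exists z, (E w /\ sE (K0 (k + i)%N) w < rr i) ->
      [/\ E z, sF (k + i)%N z <= b i & sE (K0 (k + i.+1)%N) (ssub w z) < rr i.+1].
    move=> i w; have [[Ew hw]|nh] := pselect (E w /\ sE (K0 (k + i)%N) w < rr i);
      last by exists w => /nh.
    have [_ [_ h]] := ACP (k + i)%N.
    have [z [Ez [h1 h2]]] := h (rr i) w (rrp i) Ew hw (K0 (k + i.+1)%N) (rr i.+1) (rrp i.+1).
    by exists z => _; split => //; apply: le_trans h1 (Crr i).
  pose zf i w := projT1 (cid (step i w)).
  have zfP i w : (E w /\ sE (K0 (k + i)%N) w < rr i) -> 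
      [/\ E (zf i w), sF (k + i)%N (zf i w) <= b i &
          sE (K0 (k + i.+1)%N) (ssub w (zf i w)) < rr i.+1] := projT2 (cid (step i w)).
  pose w := fix f i := if i is i'.+1 then ssub (f i') (zf i' (f i')) else y.
  have inv : forall i, E (w i) /\ sE (K0 (k + i)%N) (w i) < rr i.
    elim => [|i [ih1 ih2]].
      by split => //; rewrite /rr addn0 b0.
    by have [? ? ?] := zfP i (w i) (conj ih1 ih2); split => //; exact: (fkB hE).
  pose z i := zf i (w i).
  have hz i : E (z i) /\ sF (k + i)%N (z i) <= b i.
    by have [? ? ?] := zfP i (w i) (inv i).
  have Ew i : E (w i) by case: (inv i).
  have Fw i : F (w i) by apply: sub.
  have Fz i : F (z i) by apply: sub; case: (hz i).
  have claimS : forall n m l, (l <= k + n)%N ->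
      sF l (ssub (w n) (w (n + m)%N)) <= 2 * b n - 2 * b (n + m)%N.
    move=> n m l hl; elim: m => [|m ih]; first by rewrite addn0 (fk_s0 hF) // subrr.
    rewrite addnS.
    have -> : w (n + m)%N.+1 = ssub (w (n + m)%N) (z (n + m)%N) by [].
    have -> : ssub (w n) (ssub (w (n + m)%N) (z (n + m)%N)) = sadd (ssub (w n) (w (n + m)%N)) (z (n + m)%N).
      by apply: funext => i; rewrite /ssub /sadd; ring.
    apply: le_trans (fk_tri hF _ _ _) _; [exact: (fkB hF) | exact: Fz |].
    have h1 : sF l (z (n + m)%N) <= sF (k + (n + m))%N (z (n + m)%N).
      by apply: (fk_monoN hF) => //; apply: (leq_trans hl); rewrite leq_add2l leq_addr.
    have [_ h2] := hz (n + m)%N.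
    rewrite bS; lra.
  pose sp n := ssub y (w n).
  have Fsp n : F (sp n) by apply: (fkB hF); [exact: sub | exact: Fw].
  have [x [Fx hx]] : exists x, F x /\ forall k (e : R), 0 < e -> exists N, forall n, (N <= n)%N ->
             sF k (ssub (sp n) x) < e.
    apply: (fk_cpl hF) => // l eps epsp.
    have [N0 hN0] := bsmall (eps / 4) (divr_gt0 epsp (ltr0Sn _ 3)).
    pose N := maxn N0 l.
    have bN : b N < eps / 4 by apply: hN0; exact: leq_maxl.
    have lN : (l <= k + N)%N by apply: leq_trans (leq_maxr N0 l) _; exact: leq_addl.
    exists N => m n hm hn.
    have -> : ssub (sp m) (sp n) = ssub (w n) (w m).
      by apply: funext => i; rewrite /sp /ssub; ring.
    have h1 := claimS N (n - N)%N l lN; rewrite subnKC // in h1.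
    have h2 := claimS N (m - N)%N l lN; rewrite subnKC // in h2.
    have h3 := fk_tri3 hF l (Fw n) (Fw N) (Fw m).
    rewrite (fk_sym hF l (Fw N) (Fw n)) in h3.
    have := bp n; have := bp m; lra.
  have xy : x = y.
    apply: funext => j; apply/eqP; rewrite -subr_eq0; apply/eqP.
    apply: cabs_le_eps0 => eps epsp.
    have [kF [cF [cFp hcF]]] := fk_coord hF j.
    have [kE [cE [cEp hcE]]] := fk_coord hE j.
    have [N1 hN1] := hx kF (eps / 2 / cF) (divr_gt0 (divr_gt0 epsp (ltr0Sn _ 1)) cFp).
    have [N2 hN2] := bsmall (eps / 2 / cE) (divr_gt0 (divr_gt0 epsp (ltr0Sn _ 1)) cEp).
    pose n := maxn (maxn N1 N2) kE.
    have h1 := hN1 n (leq_trans (leq_maxl N1 N2) (leq_maxl _ _)).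
    have h2 := hN2 n (leq_trans (leq_maxr N1 N2) (leq_maxl _ _)).
    have h3 : sE kE (w n) <= sE (K0 (k + n)%N) (w n).
      apply: (fk_monoN hE) => //; apply: leq_trans (leq_maxr (maxn N1 N2) kE) _.
      apply: leq_trans (leq_addl k n) _; by case: (ACP (k + n)%N).
    have h4 := hcF _ (fkB hF (Fsp n) Fx).
    have h5 := hcE _ (Ew n).
    have [_ h6] := inv n.
    have h7 := rrb n.
    have -> : x j - y j = - (ssub (sp n) x j) - w n j.
      by rewrite /sp /ssub; ring.
    apply: le_trans (cabsD _ _) _; rewrite !cabsN.
    have e1 : cF * sF kF (ssub (sp n) x) <= eps / 2.
      rewrite -ler_pdivlMl // mulrC; exact: ltW.
    have e2 : cE * sE kE (w n) <= eps / 2.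
      rewrite -ler_pdivlMl // mulrC; apply: ltW; lra.
    lra.
  apply: le_eps => eps epsp.
  have [N hN] := hx k eps epsp.
  have h1 := hN N (leqnn N).
  rewrite -(fk_sym hF k (Fsp N) Fx) in h1.
  have h2 : sF k x <= sF k (ssub x (sp N)) + sF k (sp N).
    rewrite {1}(_ : x = sadd (ssub x (sp N)) (sp N)); last first.
      by apply: funext => i; rewrite /sadd /ssub; ring.
    by apply: (fk_tri hF) => //; exact: (fkB hF).
  rewrite -{1}xy.
  have h3 := claimS 0%N N k (leq_addr 0 k); rewrite add0n b0 in h3.
  have h4 := bp N.
  rewrite /sp in h2; lra.
have C1p : 0 < 1 + Cf k.
  by case: (ACP k) => _ [h _]; apply: lt_le_trans ltr01 _; rewrite lerDl.
exists (K0 k), (2 * (1 + Cf k)); split; first by rewrite mulr_ge0 // ltW.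
move=> y Ey; apply: le_eps => eps epsp.
have t0 := fk_ge0 hE (K0 k) Ey.
set t := sE (K0 k) y in t0 *.
have ep2 : 0 < eps / (2 * (1 + Cf k)) by rewrite divr_gt0 // mulr_gt0.
pose r := (1 + Cf k) * (t + eps / (2 * (1 + Cf k))).
have rp : 0 < r by rewrite /r mulr_gt0 //; lra.
have hy : t < r / (1 + Cf k).
  have -> : r / (1 + Cf k) = t + eps / (2 * (1 + Cf k)).
    by rewrite /r; field; rewrite gt_eqF.
  lra.
have := main y r Ey rp hy.
have -> : 2 * r = 2 * (1 + Cf k) * t + eps.
  by rewrite /r; field; rewrite gt_eqF.
by [].
Qed.


Section RealHB.
Local Open Scope classical_set_scope.
Variables (X : seqC R -> Prop) (p : seqC R -> R) (B : seqC R -> Prop) (u : seqC R -> R).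
Hypotheses (XD : forall x y, X x -> X y -> X (sadd x y))
  (XZ : forall a x, X x -> X (sscale a x))
  (pD : forall x y, X x -> X y -> p (sadd x y) <= p x + p y)
  (pZ : forall a x, X x -> p (sscale a x) = cabs a * p x)
  (BX : forall x, B x -> X x) (B0 : B (szero R))
  (BD : forall x y, B x -> B y -> B (sadd x y))
  (BZ : forall a x, B x -> B (sscale a x))
  (uD : forall x y, B x -> B y -> u (sadd x y) = u x + u y)
  (uZ : forall (r : R) x, B x -> u (sscale r%:C x) = r * u x)
  (up : forall x, B x -> u x <= p x).

Definition good (G : set (seqC R * R)) :=
  [/\ (forall x t, G (x, t) -> X x),
      (forall x t t', G (x, t) -> G (x, t') -> t = t'),
      (forall x t y t', G (x, t) -> G (y, t') -> G (sadd x y, t + t')),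
      (forall (r : R) x t, G (x, t) -> G (sscale r%:C x, r * t)) &
      ((forall x t, G (x, t) -> t <= p x) /\ (forall x, B x -> G (x, u x)))].

Lemma pR (r : R) x : X x -> p (sscale r%:C x) = `|r| * p x.
Proof. by move=> ?; rewrite pZ // cabsR. Qed.

Lemma sscale0 x : sscale 0 x = szero R.
Proof. by apply: funext => i; rewrite /sscale mul0r. Qed.

Lemma good_union (F : set (set (seqC R * R))) :
  F `<=` (fun G => G = set0 \/ good G) -> total_on F subset ->
  (fun G => G = set0 \/ good G) (\bigcup_(G in F) G).
Proof.
move=> FP tot.
have gd : forall G q, F G -> G q -> good G.
  move=> G q FG Gq; case: (FP G FG) => // G0; by rewrite G0 in Gq.
have [[G0 [FG0 [q0 G0q]]]|nh] := pselect (exists G, F G /\ exists q, G q); last first.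
  left; apply/seteqP; split => q // [G FG Gq]; exfalso; apply: nh; by exists G; split => //; exists q.
right.
have two : forall q1 q2, (\bigcup_(G in F) G) q1 -> (\bigcup_(G in F) G) q2 ->
    exists G, [/\ F G, good G, G q1 & G q2].
  move=> q1 q2 [G1 FG1 G1q] [G2 FG2 G2q].
  case: (tot _ _ FG1 FG2) => sub.
    by exists G2; split => //; [exact: gd FG2 G2q | exact: sub].
  by exists G1; split => //; [exact: gd FG1 G1q | exact: sub].
split.
- move=> x t [G FG Gq]; have [h _ _ _ _] := gd _ _ FG Gq; exact: h Gq.
- move=> x t t' h1 h2; have [G [FG [_ h _ _ _] G1 G2]] := two _ _ h1 h2; exact: h G1 G2.
- move=> x t y t' h1 h2; have [G [FG [_ _ h _ _] G1 G2]] := two _ _ h1 h2.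
  by exists G => //; exact: h G1 G2.
- move=> r x t [G FG Gq]; have [_ _ _ h _] := gd _ _ FG Gq; by exists G => //; exact: h Gq.
- split.
    move=> x t [G FG Gq]; have [_ _ _ _ [h _]] := gd _ _ FG Gq; exact: h Gq.
  move=> x Bx; have [_ _ _ _ [_ h]] := gd _ _ FG0 G0q; by exists G0 => //; exact: h.
Qed.

Lemma real_hb : exists U : seqC R -> R,
  [/\ forall x y, X x -> X y -> U (sadd x y) = U x + U y,
      forall (r : R) x, X x -> U (sscale r%:C x) = r * U x,
      forall x, X x -> U x <= p x &
      forall x, B x -> U x = u x].
Proof.
have [A [PA maxA]] := @Zorn_bigcup (seqC R * R) (fun G => G = set0 \/ good G) good_union.
pose G0 : set (seqC R * R) := [set z | B z.1 /\ z.2 = u z.1].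
have gG0 : good G0.
  split.
  - by move=> x t [/BX].
  - by move=> x t t' [_ /= ->] [_ /= ->].
  - move=> x t y t' [/= Bx ->] [/= By ->]; split => /=; [exact: BD | exact/esym/uD].
  - move=> r x t [/= Bx ->]; split => /=; [exact: BZ | exact/esym/uZ].
  - split; first by move=> x t [/= Bx ->]; exact: up.
    by move=> x Bx; split.
have gA : good A.
  case: PA => // A0; exfalso; apply: (maxA G0); last by right.
  rewrite A0; split; first by [].
  by move=> /(_ (szero R, u (szero R))) h; have := h (conj B0 erefl).
have [AX Afun AD AZ [Ap AB]] := gA.
have A00 : A (szero R, 0).
  have := AZ 0 _ _ (AB _ B0); rewrite sscale0 mul0r; exact.
have total : forall x0, X x0 -> exists t, A (x0, t).
  move=> x0 Xx0; apply: contrapT => nA.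
  have nA' : forall t, ~ A (x0, t) by move=> t At; apply: nA; exists t.
  pose S : set R := [set v | exists d h, A (d, h) /\ v = h - p (ssub d x0)].
  have key : forall d h d' h', A (d, h) -> A (d', h') -> h - p (ssub d x0) <= p (sadd d' x0) - h'.
    move=> d h d' h' Ad Ad'.
    have Xd := AX _ _ Ad; have Xd' := AX _ _ Ad'.
    have h1 := Ap _ _ (AD _ _ _ _ Ad Ad').
    have e : sadd d d' = sadd (ssub d x0) (sadd d' x0).
      by apply: funext => i; rewrite /sadd /ssub; ring.
    have Xs : X (ssub d x0) by rewrite ssub_addE; apply: (XD) => //; exact: XZ.
    have h2 := pD Xs (XD Xd' Xx0); rewrite -e in h2.
    lra.
  have S0 : S !=set0 by exists (0 - p (ssub (szero R) x0)); exists (szero R), 0.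
  have Sub : has_ubound S.
    exists (p (sadd (szero R) x0) - 0) => v [d [h [Ad ->]]]; exact: key Ad A00.
  pose tau := sup S.
  have tau_ge : forall d h, A (d, h) -> h - p (ssub d x0) <= tau.
    by move=> d h Ad; apply: ub_le_sup => //; exists d, h.
  have tau_le : forall d h, A (d, h) -> tau <= p (sadd d x0) - h.
    by move=> d h Ad; apply: ge_sup => // v [d' [h' [Ad' ->]]]; exact: key Ad' Ad.
  pose A' : set (seqC R * R) :=
    [set z | exists d h (a : R), A (d, h) /\ z = (sadd d (sscale a%:C x0), h + a * tau)].
  apply: (maxA A'); last first.
    right; split.
    - move=> x t [d [h [a [Ad [-> _]]]]]; apply: (XD); [exact: AX Ad | exact: XZ].
    - move=> x t t' [d [h [a [Ad [ex et]]]]] [d' [h' [a' [Ad' [ex' et']]]]].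
      rewrite et et'.
      have [aa|aa] := eqVneq a a'.
        rewrite -aa in ex' *.
        have dd : d = d'.
          apply: funext => i; have := congr1 (fun f => f i) (etrans (esym ex) ex').
          rewrite /sadd /sscale => /eqP; rewrite (can_eq (addrK _)) => /eqP //.
        by rewrite -dd in Ad'; rewrite (Afun _ _ _ Ad Ad').
      exfalso; apply: (nA' ((a - a')^-1 * (h' - h))).
      have cne : (a - a')%:C != 0 by rewrite (inj_eq (@complexI R)) subr_eq0.
      have -> : x0 = sscale ((a - a')^-1)%:C (sadd d' (sscale (-1)%:C d)).
        apply: funext => i; have := congr1 (fun f => f i) (etrans (esym ex) ex').
        rewrite /sadd /sscale => e; rewrite fmorphV /=.
        have -> : d' i + (-1)%:C * d i = (a - a')%:C * x0 i.
          rewrite rmorphB /= rmorphN rmorph1.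
          have -> : d' i = d i + a%:C * x0 i - a'%:C * x0 i by rewrite e; ring.
          ring.
        by rewrite mulKf.
      apply: (AZ); apply: (AD) => //; rewrite (_ : - h = -1 * h); last by rewrite mulN1r.
      exact: AZ.
    - move=> x t y t' [d [h [a [Ad [-> ->]]]]] [d' [h' [a' [Ad' [-> ->]]]]].
      exists (sadd d d'), (h + h'), (a + a'); split; first exact: AD.
      congr pair; last by ring.
      by apply: funext => i; rewrite /sadd /sscale rmorphD /=; ring.
    - move=> r x t [d [h [a [Ad [-> ->]]]]].
      exists (sscale r%:C d), (r * h), (r * a); split; first exact: AZ.
      congr pair; last by ring.
      by apply: funext => i; rewrite /sadd /sscale rmorphM /=; ring.
    - split.
        move=> x t [d [h [a [Ad [-> ->]]]]].
        have Xd := AX _ _ Ad.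
        have [a0|a0|a0] := ltgtP a 0.
        + pose b := - a.
          have bp : 0 < b by rewrite /b oppr_gt0.
          have Ad1 := AZ (b^-1) _ _ Ad.
          have Xd1 := AX _ _ Ad1.
          have h1 := tau_ge _ _ Ad1.
          have e : sadd d (sscale a%:C x0) = sscale b%:C (ssub (sscale (b^-1)%:C d) x0).
            apply: funext => i; rewrite /sadd /sscale /ssub mulrBr mulrA -rmorphM /= divff ?gt_eqF //.
            by rewrite /b rmorphN /=; ring.
          rewrite e pR; last by rewrite ssub_addE; apply: (XD) => //; exact: XZ.
          rewrite gtr0_norm //.
          have : b * (b^-1 * h - p (ssub (sscale (b^-1)%:C d) x0)) <= b * tau.
            by rewrite ler_pM2l.
          rewrite mulrBr mulrA divff ?gt_eqF // mul1r /b; lra.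
        + have Ad1 := AZ (a^-1) _ _ Ad.
          have h1 := tau_le _ _ Ad1.
          have e : sadd d (sscale a%:C x0) = sscale a%:C (sadd (sscale (a^-1)%:C d) x0).
            apply: funext => i; rewrite /sadd /sscale mulrDr mulrA -rmorphM /= divff ?gt_eqF //.
            by rewrite mul1r.
          rewrite e pR; last by apply: (XD) => //; exact: XZ.
          rewrite gtr0_norm //.
          have : a * tau <= a * (p (sadd (sscale (a^-1)%:C d) x0) - a^-1 * h).
            by rewrite ler_pM2l.
          rewrite mulrBr mulrA divff ?gt_eqF // mul1r; lra.
        + rewrite a0 mul0r addr0 (_ : sadd d (sscale 0%:C x0) = d); first exact: Ap Ad.
          by apply: funext => i; rewrite /sadd /sscale mul0r addr0.
      move=> x Bx; exists x, (u x), 0; split; first exact: AB.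
      congr pair; last by rewrite mul0r addr0.
      by apply: funext => i; rewrite /sadd /sscale mul0r addr0.
  split.
    move=> [x t] Axt; exists x, t, 0; split => //.
    congr pair; last by rewrite mul0r addr0.
    by apply: funext => i; rewrite /sadd /sscale mul0r addr0.
  move=> /(_ (x0, tau)) h; apply: (nA' tau); apply: h.
  exists (szero R), 0, 1; split => //; congr pair; last by rewrite add0r mul1r.
  by apply: funext => i; rewrite /sadd /sscale mul1r /szero add0r.
have Uex : forall x, exists t, X x -> A (x, t).
  move=> x; have [Xx|nX] := pselect (X x); last by exists 0.
  by have [t At] := total x Xx; exists t.
pose U x := projT1 (cid (Uex x)).
have UA : forall x, X x -> A (x, U x) := fun x => projT2 (cid (Uex x)).
exists U; split.
- move=> x y Xx Xy; apply: (Afun) (UA _ (XD Xx Xy)) _; exact: AD (UA _ Xx) (UA _ Xy).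
- move=> r x Xx; apply: (Afun) (UA _ (XZ _ Xx)) _; exact: AZ (UA _ Xx).
- move=> x Xx; exact: Ap (UA _ Xx).
- move=> x Bx; exact: Afun (UA _ (BX Bx)) (AB _ Bx).
Qed.

End RealHB.


Lemma ReD (a b : C) : complex.Re (a + b) = complex.Re a + complex.Re b.
Proof. by case: a => ? ?; case: b. Qed.

Lemma ReMr (r : R) (a : C) : complex.Re (r%:C * a) = r * complex.Re a.
Proof. by case: a => a1 a2 /=; rewrite mul0r subr0. Qed.

Lemma Re_i (a : C) : complex.Re ('i%C * a) = - complex.Im a.
Proof. by case: a => a1 a2 /=; rewrite mul0r mul1r sub0r. Qed.

Section ComplexHB.
Variables (X : seqC R -> Prop) (p : seqC R -> R) (B : seqC R -> Prop) (g : seqC R -> C).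
Hypotheses (XD : forall x y, X x -> X y -> X (sadd x y))
  (XZ : forall a x, X x -> X (sscale a x))
  (p0 : forall x, X x -> 0 <= p x)
  (pD : forall x y, X x -> X y -> p (sadd x y) <= p x + p y)
  (pZ : forall a x, X x -> p (sscale a x) = cabs a * p x)
  (BX : forall x, B x -> X x) (B0 : B (szero R))
  (BD : forall x y, B x -> B y -> B (sadd x y))
  (BZ : forall a x, B x -> B (sscale a x))
  (gD : forall x y, B x -> B y -> g (sadd x y) = g x + g y)
  (gZ : forall a x, B x -> g (sscale a x) = a * g x)
  (gp : forall x, B x -> cabs (g x) <= p x).

Lemma complex_hb : exists f : seqC R -> C,
  [/\ forall x y, X x -> X y -> f (sadd x y) = f x + f y,
      forall a x, X x -> f (sscale a x) = a * f x,
      forall x, X x -> cabs (f x) <= p x &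
      forall x, B x -> f x = g x].
Proof.
pose u x := complex.Re (g x).
have uD : forall x y, B x -> B y -> u (sadd x y) = u x + u y.
  by move=> x y Bx By; rewrite /u gD // ReD.
have uZ : forall (r : R) x, B x -> u (sscale r%:C x) = r * u x.
  by move=> r x Bx; rewrite /u gZ // ReMr.
have up : forall x, B x -> u x <= p x.
  by move=> x Bx; apply: le_trans (Re_le_cabs _) (gp Bx).
have [U [UD UZ Up UB]] := real_hb XD XZ pD pZ BX B0 BD BZ uD uZ up.
pose f x := Complex (U x) (- U (sscale 'i%C x)).
have ReF x : complex.Re (f x) = U x by [].
have iD x y : sscale 'i%C (sadd x y) = sadd (sscale 'i%C x) (sscale 'i%C y).
  by apply: funext => j; rewrite /sscale /sadd mulrDr.
have fD : forall x y, X x -> X y -> f (sadd x y) = f x + f y.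
  move=> x y Xx Xy; rewrite /f iD UD ?UD //; try exact: XZ.
  by apply/eqP; rewrite eq_complex /= opprD !eqxx.
have fZ : forall a x, X x -> f (sscale a x) = a * f x.
  move=> a x Xx; case: a => a1 a2.
  have e1 : sscale (Complex a1 a2) x = sadd (sscale a1%:C x) (sscale a2%:C (sscale 'i%C x)).
    apply: funext => j; rewrite /sscale /sadd mulrA.
    rewrite -mulrDl; congr (_ * _).
    by apply/eqP; rewrite eq_complex /=; apply/andP; split; apply/eqP; ring.
  have e2 : sscale 'i%C (sscale (Complex a1 a2) x) =
      sadd (sscale (- a2)%:C x) (sscale a1%:C (sscale 'i%C x)).
    apply: funext => j; rewrite /sscale /sadd !mulrA.
    rewrite -mulrDl; congr (_ * _).
    by apply/eqP; rewrite eq_complex /=; apply/andP; split; apply/eqP; ring.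
  rewrite /f e2 e1 !UD ?UZ //; try (by apply: XZ); try (by apply: XZ; apply: XZ).
  by apply/eqP; rewrite eq_complex /=; apply/andP; split; apply/eqP; ring.
exists f; split => //.
- move=> x Xx; set w := f x.
  have hw : f (sscale (w^*)%C x) = (w^*)%C * w by exact: fZ.
  have h1 : complex.Re (f (sscale (w^*)%C x)) <= p (sscale (w^*)%C x) by rewrite ReF; apply: Up; exact: XZ.
  rewrite hw mulrC mul_conj pZ // cabs_conj in h1.
  have h1' : cabs w ^+ 2 <= cabs w * p x by exact: h1.
  have [c0|c0] := eqVneq (cabs w) 0; first by rewrite c0; exact: p0.
  have cp : 0 < cabs w by rewrite lt_def c0 cabs_ge0.
  by rewrite -(ler_pM2l cp) -expr2.
- move=> x Bx; rewrite /f UB // UB; last exact: BZ.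
  rewrite /u gZ // Re_i opprK.
  by case: (g x).
Qed.

End ComplexHB.


Lemma FK_FKl X sn : is_FK X sn -> FKl X sn.
Proof.
move=> [h0 [hD [hZ [hge [htri [hhom [hmono [_ [hcpl hco]]]]]]]]].
split => // j; have [k [c hc]] := hco j.
exists k, (`|c| + 1); split; first by rewrite ltr_wpDl.
move=> x Xx; apply: le_trans (hc x Xx) _; apply: ler_wpM2r; first exact: hge.
by apply: le_trans (ler_norm c) _; rewrite lerDl.
Qed.

Lemma in_phi_add x y : in_phi x -> in_phi y -> in_phi (sadd x y).
Proof.
move=> [N1 h1] [N2 h2]; exists (maxn N1 N2) => j hj.
rewrite /sadd h1 ?h2 ?addr0 //; apply: leq_trans hj; [exact: leq_maxr | exact: leq_maxl].
Qed.

Lemma in_phi_scale a x : in_phi x -> in_phi (sscale a x).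
Proof. by move=> [N h]; exists N => j hj; rewrite /sscale h // mulr0. Qed.

Lemma phi_in_X X sn : is_FK X sn -> (forall j, X (delta R j)) -> forall x, in_phi x -> X x.
Proof.
move=> hX hd x [N hN]; have hF := FK_FKl hX.
pose tr n := fun i => if (i < n)%N then x i else 0.
have htr : forall n, X (tr n).
  elim => [|n ih].
    rewrite (_ : tr 0%N = szero R); first exact: (fk0 hF).
    by apply: funext => i.
  rewrite (_ : tr n.+1 = sadd (tr n) (sscale (x n) (delta R n))).
    by apply: (fkD hF) => //; apply: (fkZ hF).
  apply: funext => i; rewrite /tr /sadd /sscale /delta ltnS leq_eqVlt.
  have [->|ne] := eqVneq i n; first by rewrite ltnn mulr1 add0r.
  by rewrite /= mulr0 addr0.
rewrite (_ : x = tr N) //; apply: funext => i; rewrite /tr.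
by case: ltnP => // /hN ->.
Qed.

Lemma phi_cl_FKl X sn : is_FK X sn -> (forall j, X (delta R j)) -> FKl (phi_closure X sn) sn.
Proof.
move=> hX hd; have hF := FK_FKl hX.
have pX := phi_in_X hX hd.
have Xcl : forall x, phi_closure X sn x -> X x by move=> x [].
split.
- split; first exact: (fk0 hF).
  move=> k e ep; exists (szero R); split; first by exists 0%N.
  by rewrite (fk_s0 hF) //; exact: (fk0 hF).
- move=> x y [Xx hx] [Xy hy]; split; first exact: (fkD hF).
  move=> k e ep; have e2 : 0 < e / 2 by rewrite divr_gt0.
  have [x1 [px1 h1]] := hx k _ e2; have [y1 [py1 h2]] := hy k _ e2.
  exists (sadd x1 y1); split; first exact: in_phi_add.
  rewrite (_ : ssub (sadd x y) (sadd x1 y1) = sadd (ssub x x1) (ssub y y1)); last first.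
    by apply: funext => i; rewrite /ssub /sadd; ring.
  have hxx := fkB hF Xx (pX _ px1); have hyy := fkB hF Xy (pX _ py1).
  have := fk_tri hF k hxx hyy; lra.
- move=> a x [Xx hx]; split; first exact: (fkZ hF).
  move=> k e ep; have c0 := cabs_ge0 a.
  have e2 : 0 < e / (cabs a + 1) by rewrite divr_gt0 // ltr_wpDl.
  have [x1 [px1 h1]] := hx k _ e2.
  exists (sscale a x1); split; first exact: in_phi_scale.
  rewrite (_ : ssub (sscale a x) (sscale a x1) = sscale a (ssub x x1)); last first.
    by apply: funext => i; rewrite /ssub /sscale; ring.
  rewrite (fk_hom hF); last exact: (fkB hF Xx (pX _ px1)).
  apply: (le_lt_trans (ler_wpM2l c0 (ltW h1))).
  rewrite mulrA ltr_pdivrMr ?ltr_wpDl //; nra.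
- move=> k x [Xx _]; exact: (fk_ge0 hF).
- move=> k x y [Xx _] [Xy _]; exact: (fk_tri hF).
- move=> k a x [Xx _]; exact: (fk_hom hF).
- move=> k x [Xx _]; exact: (fk_mono hF).
- move=> u hu hc; have [x [Xx hx]] := fk_cpl hF (fun n => Xcl _ (hu n)) hc.
  exists x; split => //; split => // k e ep.
  have e2 : 0 < e / 2 by rewrite divr_gt0.
  have [N hN] := hx k _ e2; have h1 := hN N (leqnn N).
  have [_ hcl] := hu N; have [y [py h2]] := hcl k _ e2.
  exists y; split => //.
  have := fk_tri3 hF k Xx (Xcl _ (hu N)) (pX _ py).
  rewrite (fk_sym hF k (Xcl _ (hu N)) Xx); lra.
- move=> j; have [k [c [cp hc]]] := fk_coord hF j.
  by exists k, c; split => // x [Xx _]; exact: hc.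
Qed.

End Basics.

Theorem mainTheorem9 (R : realType) (p q : nat -> nat)
  (hpq : forall n, (p n < q n)%N)
  (hq : forall M, exists N, forall n, (N <= n)%N -> (M <= q n)%N)
  (X : seqC R -> Prop) (snX : nat -> seqC R -> R)
  (hX : is_FK X snX) (hphiX : forall j, X (delta R j))
  (Y : seqC R -> Prop) (snY : nat -> seqC R -> R)
  (hY : is_FK Y snY)
  (hclY : forall x, phi_closure X snX x -> Y x)
  (hYX : forall x, Y x -> X x) :
  DqpBplus Y snY p q = DqpBplus X snX p q.
Proof.
have hXl := FK_FKl hX; have hYl := FK_FKl hY.
have hPl := phi_cl_FKl hX hphiX.
apply: funext => x; apply: propext; split.
- move=> H f [fD fZ [k [c hf]]]; apply: H; split.
  + by move=> u v Yu Yv; apply: fD; apply: hYX.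
  + by move=> a u Yu; apply: fZ; apply: hYX.
  + have [k' [c' [c'0 hc']]] := incl_cont hYl hXl hYX k.
    exists k', (Num.max c 0 * c') => y Yy.
    apply: le_trans (hf y (hYX _ Yy)) _.
    apply: le_trans (_ : _ <= Num.max c 0 * snX k y) _.
      by apply: ler_wpM2r; [exact: (fk_ge0 hXl k (hYX _ Yy)) | by rewrite le_max lexx].
    rewrite -mulrA; apply: ler_wpM2l; [by rewrite le_max lexx orbT | exact: hc'].
- move=> H g [gD gZ [k [c hg]]].
  have [k' [c' [c'0 hc']]] := incl_cont hPl hYl hclY k.
  pose c0 := Num.max c 0 * c'.
  have c00 : 0 <= c0 by rewrite mulr_ge0 // le_max lexx orbT.
  pose pp := fun y => c0 * snX k' y.
  have Bsub : forall y, phi_closure X snX y -> X y by move=> y [].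
  have pp0 : forall y, X y -> 0 <= pp y.
    by move=> y Xy; rewrite /pp mulr_ge0 // (fk_ge0 hXl).
  have ppD : forall y z, X y -> X z -> pp (sadd y z) <= pp y + pp z.
    move=> y z Xy Xz; rewrite /pp -mulrDr; apply: ler_wpM2l => //; exact: (fk_tri hXl).
  have ppZ : forall a y, X y -> pp (sscale a y) = cabs a * pp y.
    by move=> a y Xy; rewrite /pp (fk_hom hXl) // mulrCA.
  have gp : forall y, phi_closure X snX y -> cabs (g y) <= pp y.
    move=> y By; apply: le_trans (hg y (hclY _ By)) _.
    apply: le_trans (_ : _ <= Num.max c 0 * snY k y) _.
      by apply: ler_wpM2r; [exact: (fk_ge0 hYl k (hclY _ By)) | by rewrite le_max lexx].
    rewrite /pp /c0 -mulrA; apply: ler_wpM2l; [by rewrite le_max lexx orbT | exact: hc'].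
  have [f [fD fZ fp fg]] := complex_hb (fkD hXl) (fkZ hXl) pp0 ppD ppZ
    Bsub (fk0 hPl) (fkD hPl) (fkZ hPl)
    (fun y z By Bz => gD _ _ (hclY _ By) (hclY _ Bz))
    (fun a y By => gZ _ _ (hclY _ By)) gp.
  have [M hM] := H f (And3 fD fZ (ex_intro _ k' (ex_intro _ c0 fp))).
  exists M => n; have := hM n.
  have fgd : forall j, f (delta R j) = g (delta R j).
    move=> j; apply: fg; split; first exact: hphiX.
    move=> kk e ep; exists (delta R j); split.
      by exists j.+1 => i hi; rewrite /delta; case: eqP => // ei; rewrite ei ltnn in hi.
    by rewrite (fk_s0 hXl).
  by under eq_bigr => kk _ do under eq_bigr => j _ do rewrite fgd.
Qed.
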